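(* Let $\lambda_1,\dots,\lambda_n$ be positive integers, $L=\mathrm{lcm}(\lambda_1,\dots,\lambda_n)$, $\omega_i=L/\lambda_i$, and $\Lambda=\langle1/\lambda_1,\dots,1/\lambda_n\rangle$ the additive submonoid of $\mathbb{Q}_{\ge}$ they generate. If $\Lambda$ is quasinormal, then $L+1$ lies in the additive submonoid $\langle\omega_1,\dots,\omega_n\rangle$ of $\mathbb{N}$ generated by $\omega_1,\dots,\omega_n$.
   Context: A submonoid $S$ of $\mathbb{Q}_{\ge}$ is quasinormal if whenever $x\in S$ and $x\ge p$ for a positive integer $p$, there exist $y_1,\dots,y_p\in S$ with $y_i\ge1$ for all $i$ and $x=y_1+\cdots+y_p$. *)

(* Defs.v *)
From mathcomp Require Import all_boot all_order all_algebra.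
Set Implicit Arguments. Unset Strict Implicit. Unset Printing Implicit Defensive.
Import Order.TTheory GRing.Theory Num.Theory.
Local Open Scope ring_scope.

Definition rat_monoid_gen (n : nat) (g : 'I_n -> rat) (x : rat) : Prop :=
  exists c : 'I_n -> nat, x = \sum_(i < n) (c i)%:R * g i.

Definition nat_monoid_gen (n : nat) (w : 'I_n -> nat) (m : nat) : Prop :=
  exists c : 'I_n -> nat, m = (\sum_(i < n) c i * w i)%N.

Definition quasinormal (S : rat -> Prop) : Prop :=
  forall (x : rat) (p : nat), S x -> (0 < p)%N -> p%:R <= x ->
    exists y : 'I_p -> rat,
      (forall i, S (y i)) /\ (forall i, 1 <= y i) /\ x = \sum_(i < p) y i.

Definition lcm_all (n : nat) (lam : 'I_n -> nat) : nat :=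
  \big[lcmn/1%N]_(i < n) lam i.

(* Main.v *)
Require Import Defs.
From mathcomp Require Import all_boot all_order all_algebra.
From mathcomp Require Import zify ring lra.
Import Order.TTheory GRing.Theory Num.Theory.
Local Open Scope ring_scope.

Lemma bez_fam n (w : 'I_n -> nat) : exists a : 'I_n -> int,
  \sum_(i < n) a i * (w i)%:Z = (\big[gcdn/0%N]_(i < n) w i)%:Z.
Proof.
elim: n w => [|n IH] w.
  by exists (fun _ => 0); rewrite !big_ord0.
have [a' Ha'] := IH (fun j => w (lift ord0 j)).
have [u [v Huv]] := Bezoutz (w ord0)%:Z (\big[gcdn/0%N]_(i < n) w (lift ord0 i))%:Z.
exists (fun i => if unlift ord0 i is Some j then v * a' j else u).
rewrite !big_ord_recl unlift_none.
under eq_bigr => j _ do rewrite liftK -mulrA.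
by rewrite -mulr_sumr Ha' Huv.
Qed.

Lemma Posz_sum n (F : 'I_n -> nat) : ((\sum_(i < n) F i)%N)%:Z = \sum_(i < n) (F i)%:Z.
Proof. by apply: (big_morph Posz PoszD). Qed.

Lemma natr_sumQ n (F : 'I_n -> nat) : ((\sum_(i < n) F i)%N)%:R = \sum_(i < n) (F i)%:R :> rat.
Proof. by rewrite natr_sum. Qed.

Section Main.
Variables (n : nat) (lam : 'I_n -> nat).
Hypothesis n0 : (0 < n)%N.
Hypothesis lam0 : forall i, (0 < lam i)%N.
Let L := lcm_all lam.
Let om i := (L %/ lam i)%N.

Lemma L0 : (0 < L)%N.
Proof. rewrite /L /lcm_all; apply big_ind => //= x y ? ?; rewrite lcmn_gt0; lia. Qed.

Lemma lamL i : (lam i %| L)%N.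
Proof. by rewrite /L /lcm_all; apply: (biglcmn_sup i) => //. Qed.

Lemma omL i : L = (om i * lam i)%N.
Proof. by rewrite /om divnK // lamL. Qed.

Lemma G1 : (\big[gcdn/0%N]_(i < n) om i = 1)%N.
Proof.
set G := (\big[gcdn/0%N]_(i < n) om i).
have Gd i : (G %| om i)%N by apply: (biggcdn_inf i).
have G0 : (0 < G)%N.
  rewrite lt0n; apply/negP => /eqP GE; have := Gd (Ordinal n0); rewrite GE dvd0n => /eqP h.
  have := omL (Ordinal n0); rewrite h mul0n => h2; have := L0; lia.
have GL : (G %| L)%N by rewrite (omL (Ordinal n0)) dvdn_mulr.
have e2 := divnK GL.
have HLG : (L %| L %/ G)%N.
  apply/dvdn_biglcmP => i _.
  have e : (L %/ G = (om i %/ G) * lam i)%N.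
    by rewrite {1}(omL i) -{1}(divnK (Gd i)) mulnAC mulnK.
  by rewrite e dvdn_mull.
have LG0 : (0 < L %/ G)%N by rewrite divn_gt0 // dvdn_leq // L0.
have := dvdn_leq LG0 HLG; have := L0; nia.
Qed.

Lemma stepA : exists c : 'I_n -> nat, exists p : nat,
  (0 < p)%N /\ (\sum_(i < n) c i * om i)%N = (p * L).+1.
Proof.
have [a Ha] := @bez_fam n om; rewrite G1 in Ha.
have {}Ha : \sum_(i < n) a i * (om i)%:Z = 1 by rewrite Ha.
pose q i := (a i %/ (lam i)%:Z)%Z.
pose c i := (absz (a i %% (lam i)%:Z)%Z + 2 * lam i)%N.
have Hc i : (c i)%:Z = a i - q i * (lam i)%:Z + 2 * (lam i)%:Z.
  have hl : (lam i)%:Z != 0 by have := lam0 i; lia.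
  have := divz_eq (a i) (lam i)%:Z; have := modz_ge0 (a i) hl.
  have := lam0 i; rewrite /c /q; lia.
pose K := \sum_(i < n) (2 - q i).
have HS : ((\sum_(i < n) c i * om i)%N)%:Z = 1 + L%:Z * K.
  rewrite Posz_sum /K mulr_sumr.
  transitivity (\sum_(i < n) a i * (om i)%:Z + \sum_(i < n) L%:Z * (2 - q i)); last by rewrite Ha.
  rewrite -big_split /=; apply: eq_bigr => i _.
  rewrite PoszM Hc (omL i) PoszM; ring.
have HS2 : (2 * L <= \sum_(i < n) c i * om i)%N.
  rewrite (bigD1 (Ordinal n0)) //=; apply: leq_trans (leq_addr _ _).
  rewrite {1}(omL (Ordinal n0)) /c; nia.
have := L0; move: HS HS2; set S := (\sum_(i < n) c i * om i)%N => HS HS2 HL.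
have K1 : 1 <= K by nia.
exists c, (absz K); split; first by lia.
nia.
Qed.

Lemma inL (d : 'I_n -> nat) :
  (\sum_(j < n) (d j)%:R * ((lam j)%:R)^-1 : rat) * L%:R = ((\sum_(j < n) d j * om j)%N)%:R.
Proof.
rewrite mulr_suml natr_sum; apply: eq_bigr => j _.
have hl : (lam j)%:R != 0 :> rat by rewrite pnatr_eq0 -lt0n lam0.
rewrite (omL j) !natrM; field; exact: hl.
Qed.

Lemma main_sec : quasinormal (rat_monoid_gen (fun i => ((lam i)%:R)^-1 : rat)) ->
  nat_monoid_gen om L.+1.
Proof.
move=> Q; have [c [p [p0 Hc]]] := stepA.
set x := \sum_(i < n) (c i)%:R * ((lam i)%:R)^-1 : rat.
have hx : rat_monoid_gen (fun i => ((lam i)%:R)^-1 : rat) x by exists c.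
have hxL : x * L%:R = p%:R * L%:R + 1 by rewrite inL Hc -natrM -natr1.
have Lr : 0 < L%:R :> rat by rewrite ltr0n L0.
have hp : p%:R <= x.
  by rewrite -(ler_pM2r Lr) hxL lerDl.
have [y [Hy [Hy1 Hsum]]] := Q x p hx p0 hp.
case: (boolP [exists j, 1 < y j]) => [/existsP [j hj] | /existsPn hno]; last first.
  have : x = p%:R.
    rewrite Hsum (eq_bigr (fun _ => 1)) ?sumr_const ?card_ord //.
    by move=> i _; apply/eqP; rewrite eq_le Hy1 andbT leNgt hno.
  move=> ex; move: hxL; by rewrite ex => /eqP; rewrite -subr_eq0 opprD addrA subrr add0r oppr_eq0 oner_eq0.
have [d hd] := Hy j.
have e1 := inL d; rewrite -hd in e1.
set m := (\sum_(j < n) d j * om j)%N in e1.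
have le : y j - 1 <= x - p%:R.
  have -> : x - p%:R = \sum_(i < p) (y i - 1).
    by rewrite sumrB sumr_const card_ord Hsum.
  rewrite (bigD1 j) //= lerDl; apply: sumr_ge0 => i _; rewrite subr_ge0; exact: Hy1.
exists d; apply/eqP; rewrite eqn_leq; apply/andP; split.
  rewrite -(ltr_nat rat) -e1; nra.
rewrite -(ler_nat rat) -natr1 -e1; nra.
Qed.
End Main.

Theorem proposition4p9 (n : nat) (lam : 'I_n -> nat) :
  (0 < n)%N ->
  (forall i, (0 < lam i)%N) ->
  quasinormal (rat_monoid_gen (fun i => ((lam i)%:R)^-1 : rat)) ->
  nat_monoid_gen (fun i => (lcm_all lam %/ lam i)%N) (lcm_all lam).+1.
Proof. move=> n0 lam0; exact: (@main_sec n lam n0 lam0). Qed.
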